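(* Let $R$ be a local $*$-ring. Then the following are equivalent: (1) $R$ is strongly $J$-$*$-clean. (2) $R$ is strongly $J$-clean. (3) $R$ is uniquely clean. (4) $R/J(R)\cong\mathbb{Z}_2$. (5) $1$ is not the sum of two units in $R$.
   Context: All rings are associative with identity. A $*$-ring is a ring $R$ with an involution $*$, i.e. a map $a\mapsto a^*$ with $(a+b)^*=a^*+b^*$, $(ab)^*=b^*a^*$, $(a^* )^*=a$. A ring is local if it has a unique maximal right ideal. $J(R)$ denotes the Jacobson radical of $R$. A projection is an element $e$ with $e^2=e=e^*$. $R$ is strongly $J$-$*$-clean if every $a\in R$ can be written $a=e+u$ with $e$ a projection, $u\in J(R)$ and $ae=ea$. $R$ is strongly $J$-clean if every $a\in R$ can be written $a=e+u$ with $e$ an idempotent, $u\in J(R)$ and $ae=ea$. $R$ is uniquely clean if every element of $R$ can be written uniquely as the sum of an idempotent and a unit. *)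

(* Defs.v *)
From HB Require Import structures.
From mathcomp Require Import all_boot all_algebra.
Set Implicit Arguments. Unset Strict Implicit. Unset Printing Implicit Defensive.
Import GRing.Theory.
Local Open Scope ring_scope.

Definition involution (R : unitRingType) (star : R -> R) : Prop :=
  (forall a b, star (a + b) = star a + star b) /\
  (forall a b, star (a * b) = star b * star a) /\
  (forall a, star (star a) = a).

Definition right_ideal (R : unitRingType) (I : R -> Prop) : Prop :=
  I 0 /\ (forall x y, I x -> I y -> I (x - y)) /\ (forall x r, I x -> I (x * r)).

Definition maximal_right_ideal (R : unitRingType) (I : R -> Prop) : Prop :=
  right_ideal I /\ ~ I 1 /\
  forall K : R -> Prop, right_ideal K -> ~ K 1 ->
    (forall x, I x -> K x) -> forall x, K x -> I x.

Definition local_ring (R : unitRingType) : Prop :=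
  exists M : R -> Prop, maximal_right_ideal M /\
    forall N : R -> Prop, maximal_right_ideal N -> forall x, N x <-> M x.

Definition jacobson (R : unitRingType) (x : R) : Prop :=
  forall M : R -> Prop, maximal_right_ideal M -> M x.

Definition idempotent (R : unitRingType) (e : R) : Prop := e * e = e.
Definition projection (R : unitRingType) (star : R -> R) (e : R) : Prop :=
  e * e = e /\ star e = e.

Definition strongly_J_star_clean (R : unitRingType) (star : R -> R) : Prop :=
  forall a : R, exists e u, projection star e /\ jacobson u /\
    a = e + u /\ a * e = e * a.

Definition strongly_J_clean (R : unitRingType) : Prop :=
  forall a : R, exists e u, idempotent e /\ jacobson u /\
    a = e + u /\ a * e = e * a.

Definition uniquely_clean (R : unitRingType) : Prop :=
  forall a : R, exists e u, idempotent e /\ u \is a GRing.unit /\ a = e + u /\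
    forall e' u', idempotent e' -> u' \is a GRing.unit -> a = e' + u' ->
      e' = e /\ u' = u.

(* R/J(R) is isomorphic to Z_2 : by the first isomorphism theorem, this is
   the existence of a surjective ring morphism R -> Z_2 with kernel J(R). *)
Definition quotient_J_iso_Z2 (R : unitRingType) : Prop :=
  exists f : {rmorphism R -> 'Z_2},
    (forall y : 'Z_2, exists x, f x = y) /\
    (forall x, f x = 0 <-> jacobson x).

Definition one_not_sum_two_units (R : unitRingType) : Prop :=
  ~ exists u v : R, u \is a GRing.unit /\ v \is a GRing.unit /\ 1 = u + v.

(* Main.v *)
Require Import Defs.
From HB Require Import structures.
From mathcomp Require Import all_boot all_algebra.
From mathcomp Require Import boolp classical_sets.
Import GRing.Theory.

Section Q.
Local Open Scope ring_scope.
Variables (R : unitRingType) (M : R -> Prop).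
Definition HQ := M 0 /\ ~ M 1 /\ (forall x y, M (x+y) <-> (M x <-> M y)) /\
   (forall x y, M (x*y) <-> (M x \/ M y)).
Hypothesis hq : HQ.
Definition fq (hh : HQ) (x : R) : 'Z_2 := if pselect (M x) then 0 else 1.

Lemma z2b : (1 + 1 : 'Z_2) = 0. Proof. exact/val_inj. Qed.

Lemma fq_add : fq hq 0 = 0 /\ {morph fq hq : x y / x + y}.
Proof.
case: hq => [H0 [H1 [HA HM]]]; rewrite /fq; split.
  by case: pselect.
move=> x y; have := HA x y.
case: (pselect (M (x+y))) => ?; case: (pselect (M x)) => ?; case: (pselect (M y)) => ? /=;
  rewrite ?addr0 ?add0r ?z2b; intuition.
Qed.
HB.instance Definition _ := GRing.isNmodMorphism.Build R 'Z_2 (fq hq) fq_add.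
Lemma fq_mul : GRing.monoid_morphism (fq hq).
Proof.
case: hq => [H0 [H1 [HA HM]]]; rewrite /fq; split.
  by case: pselect.
move=> x y; have := HM x y.
case: (pselect (M (x*y))) => ?; case: (pselect (M x)) => ?; case: (pselect (M y)) => ? /=;
  rewrite ?mulr0 ?mul0r ?mulr1; intuition.
Qed.
HB.instance Definition _ := GRing.isMonoidMorphism.Build R 'Z_2 (fq hq) fq_mul.
End Q.

Lemma z2 (y : 'Z_2) : y = 0%R \/ y = 1%R.
Proof. case: y => [[|[|n]] Hn]; [left|right|by []]; exact/val_inj. Qed.

Section Local.
Set Implicit Arguments.
Local Open Scope classical_set_scope.
Local Open Scope ring_scope.
Variables (R : unitRingType) (M : R -> Prop).
Hypothesis HM : maximal_right_ideal M.
Hypothesis Hu : forall N : R -> Prop, maximal_right_ideal N -> forall x, N x <-> M x.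

Lemma M0 : M 0. Proof. by case: HM => [[]]. Qed.
Lemma MB x y : M x -> M y -> M (x - y). Proof. by case: HM => [[_ []]] => H _ _; apply: H. Qed.
Lemma MR x r : M x -> M (x * r). Proof. by case: HM => [[_ []]] => _ H _; apply: H. Qed.
Lemma M1 : ~ M 1. Proof. by case: HM => [_ []]. Qed.
Lemma MN x : M x -> M (- x). Proof. by move=> h; rewrite -sub0r; apply: MB => //; apply: M0. Qed.
Lemma MD x y : M x -> M y -> M (x + y).
Proof. by move=> hx hy; rewrite -(opprK y); apply: MB => //; apply: MN. Qed.
Lemma MN' x : M (- x) -> M x. Proof. by move=> h; rewrite -(opprK x); apply: MN. Qed.

Lemma sub_M (J : R -> Prop) : right_ideal J -> ~ J 1 -> forall y, J y -> M y.
Proof.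
move=> HJ HJ1.
pose P := fun I : set R => I = set0 \/ (right_ideal I /\ ~ I 1 /\ (forall y, J y -> I y)).
have PI : forall I z, P I -> I z -> right_ideal I /\ ~ I 1 /\ (forall y, J y -> I y).
  move=> I z [->|//] //.
have [A [PA Amax]] : exists A, P A /\ forall B, A `<` B -> ~ P B.
  apply: Zorn_bigcup => F FP Ftot.
  case: (pselect (exists X z, F X /\ X z)); last first.
    move=> hn; left; apply/funext => z /=; apply/propext; split => //.
    by case=> X FX Xz; apply: hn; exists X, z.
  move=> [X0 [z0 [FX0 X0z0]]].
  have [[X00 _] [_ X0J]] := PI _ _ (FP _ FX0) X0z0.
  right; split; [split; [|split]|split].
  - by exists X0.
  - move=> x y [X FX Xx] [Y FY Yy].
    have [[? [XB ?]] _] := PI _ _ (FP _ FX) Xx.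
    have [[? [YB ?]] _] := PI _ _ (FP _ FY) Yy.
    case: (Ftot _ _ FX FY) => sub.
      by exists Y => //; apply: YB => //; apply: sub.
    by exists X => //; apply: XB => //; apply: sub.
  - move=> x r [X FX Xx]; exists X => //.
    by have [[? [? XR]] _] := PI _ _ (FP _ FX) Xx; apply: XR.
  - by move=> [X FX X1]; have [_ [h _]] := PI _ _ (FP _ FX) X1.
  - by move=> y Jy; exists X0 => //; apply: X0J.
have HA : right_ideal A /\ ~ A 1 /\ (forall y, J y -> A y).
  case: PA => [A0|//].
  exfalso; apply: (Amax J); last by right.
  rewrite A0; split => // /(_ 0); apply; by case: HJ.
case: HA => [Ar [A1 AJ]] y Jy.
have mA : maximal_right_ideal A.
  split => //; split => // K Kr K1 AK x Kx.
  case: (pselect (K `<=` A)) => [h|h]; first by apply: h.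
  exfalso; apply: (Amax K); first by split.
  by right; split => //; split => // z Jz; apply: AK; apply: AJ.
by apply/(@Hu A mA y); apply: AJ.
Qed.

Lemma jacM x : jacobson x <-> M x.
Proof. split; first by apply. by move=> h N mN; apply/(@Hu N mN x). Qed.

Lemma rinv x : ~ M x -> exists y, x * y = 1.
Proof.
move=> nx; case: (pselect (exists y, x * y = 1)) => // hn; exfalso; apply: nx.
apply: (@sub_M (fun z => exists r, z = x * r)); last by exists 1; rewrite mulr1.
- split; first by exists 0; rewrite mulr0.
  split; first by move=> a b [r ->] [s ->]; exists (r - s); rewrite mulrBr.
  by move=> a r' [r ->]; exists (r * r'); rewrite mulrA.
- by move=> [r h]; apply: hn; exists r.
Qed.

Lemma unitM x : ~ M x -> x \is a GRing.unit.
Proof.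
move=> nx; have [y xy] := rinv nx.
case: (pselect (M y)) => My.
  exfalso; set e := y * x.
  have ee : e * e = e by rewrite /e mulrA -(mulrA y x y) xy mulr1.
  have Me : M e by apply: MR.
  have n1e : ~ M (1 - e).
    by move=> h; apply: M1; have := MD h Me; rewrite subrK.
  have [w hw] := rinv n1e.
  have e0 : e = 0.
    by rewrite -[e]mulr1 -hw mulrA mulrBr mulr1 ee subrr mul0r.
  have y0 : y = 0 by rewrite -[y]mulr1 -xy mulrA -/e e0 mul0r.
  by apply: M1; rewrite -xy y0 mulr0; apply: M0.
have [z yz] := rinv My.
have xz : x = z by rewrite -[x]mulr1 -yz mulrA xy mul1r.
apply/unitrP; exists y; split => //; by rewrite xz.
Qed.

Lemma unit_nM x : x \is a GRing.unit -> ~ M x.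
Proof. by move=> ux Mx; apply: M1; rewrite -(mulrV ux); apply: MR. Qed.

Lemma idem01 (e : R) : e * e = e -> e = 0 \/ e = 1.
Proof.
move=> ee; case: (pselect (M e)) => Me.
  left; have n1e : ~ M (1 - e).
    by move=> h; apply: M1; have := MD h Me; rewrite subrK.
  have u := unitM n1e.
  have h : (1 - e) * (1 - e) = (1 - e) * 1.
    by rewrite mulr1 mulrBl mul1r mulrBr mulr1 ee subrr subr0.
  have h1 := mulrI u h.
  have k : e = 1 - (1 - e) by rewrite opprB addrC subrK.
  by rewrite k h1 subrr.
right; have u := unitM Me.
by apply: (mulrI u); rewrite mulr1.
Qed.

Definition PP := forall x, M x \/ M (1 - x).

Lemma L5 : one_not_sum_two_units R <-> PP.
Proof.
split.
  move=> H x; case: (pselect (M x)) => hx; first by left.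
  case: (pselect (M (1 - x))) => h1x; first by right.
  exfalso; apply: H; exists x, (1 - x); split; first exact: unitM.
  by split; [exact: unitM | rewrite addrC subrK].
move=> H [u [v [uu [uv E]]]].
case: (H u) => h; first exact: (unit_nM uu).
apply: (unit_nM uv); suff -> : v = 1 - u by [].
by rewrite E (addrC u v) addrK.
Qed.

Lemma M_addl x y : M x -> (M (x + y) <-> M y).
Proof.
move=> hx; split => h; last exact: MD.
by have := MD (MN hx) h; rewrite addKr.
Qed.

Lemma L4 : quotient_J_iso_Z2 R <-> PP.
Proof.
split.
  move=> [f [fs fk]] x; case: (z2 (f x)) => fx.
    by left; apply/jacM/fk.
  right; apply/jacM/fk; by rewrite rmorphB rmorph1 fx subrr.
move=> H.
have hq : @HQ R M.
  split; first exact: M0. split; first exact: M1.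
  split.
    move=> x y; case: (pselect (M x)) => hx.
      split => [h|h]; first by split => // _; apply/(M_addl y hx).
      by apply: MD => //; apply h.
    case: (pselect (M y)) => hy.
      split => [h|h]; last by exfalso; apply: hx; apply h.
      by exfalso; apply: hx; apply/(M_addl x hy); rewrite addrC.
    split => [h|_]; first by split => hh; tauto.
    have h1 : M (1 - x) by case: (H x).
    have h2 : M (1 - - y) by case: (H (- y)) => // /MN'.
    have := MB h2 h1; rewrite opprK opprB addrC addrA subrK.
    by rewrite addrC.
  move=> x y; split.
    move=> h; case: (pselect (M x)) => hx; first by left.
    case: (pselect (M y)) => hy; first by right.
    exfalso; apply: (unit_nM _ h).
    by rewrite unitrMl; apply: unitM.
  case=> h; first exact: MR.
  case: (pselect (M (x * y))) => // hxy; exfalso.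
  case: (pselect (M x)) => hx; first by apply: hxy; apply: MR.
  apply: (unit_nM _ h); rewrite -(unitrMr _ (unitM hx)).
  exact: unitM.
exists (@fq R M hq); split.
  move=> y; case: (z2 y) => ->; [exists 0; exact: rmorph0 | exists 1; exact: rmorph1].
move=> x; rewrite /= /fq; case: pselect => hx /=.
  by split => // _; apply/jacM.
by split => // /jacM.
Qed.

Lemma Mneg1 a : M (1 - a) -> M (a - 1).
Proof. by move=> h; rewrite -opprB; apply: MN. Qed.

Lemma L3 : uniquely_clean R <-> PP.
Proof.
split.
  move=> H x; case: (pselect (M x)) => hx; first by left.
  case: (pselect (M (1 - x))) => h1x; first by right.
  exfalso; have [e [u [ide [uu [E U]]]]] := H x.
  have [e0 _] := U 0 x (mulr0 0) (unitM hx) (esym (add0r x)).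
  have ux1 : x - 1 \is a GRing.unit by rewrite -opprB unitrN; apply: unitM.
  have Ex : x = 1 + (x - 1) by rewrite addrC subrK.
  have [e1 _] := U 1 (x - 1) (mulr1 1) ux1 Ex.
  by have := @oner_neq0 R; rewrite e1 -e0 eqxx.
move=> H a; case: (pselect (M a)) => ha.
  have ua : a - 1 \is a GRing.unit.
    apply: unitM => h; apply: M1; have := MB ha h.
    by rewrite opprB addrC subrK.
  exists 1, (a - 1); split; first exact: mulr1.
  split => //; split; first by rewrite addrC subrK.
  move=> e' u' ide' uu' E'; case: (idem01 ide') => ee.
    by exfalso; apply: (unit_nM uu'); rewrite -[u']add0r -ee -E'.
  by split => //; rewrite E' ee addrC addKr.
have h1 : M (1 - a) by case: (H a).
exists 0, a; split; first exact: mulr0.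
split; first exact: unitM.
split; first by rewrite add0r.
move=> e' u' ide' uu' E'; case: (idem01 ide') => ee.
  by split => //; rewrite E' ee add0r.
exfalso; apply: (unit_nM uu'); have -> : u' = a - 1 by rewrite E' ee addrC addKr.
exact: Mneg1.
Qed.

Lemma L2 : strongly_J_clean R <-> PP.
Proof.
split.
  move=> H x; have [e [u [ide [ju [E _]]]]] := H x.
  case: (idem01 ide) => ee.
    by left; rewrite E ee add0r; apply/jacM.
  right; apply: MN'; rewrite opprB E ee addrC addKr; exact/jacM.
move=> H a; case: (H a) => h.
  exists 0, a; split; first exact: mulr0.
  by split; [apply/jacM | rewrite add0r mulr0 mul0r].
exists 1, (a - 1); split; first exact: mulr1.
by split; [apply/jacM; exact: Mneg1 | rewrite addrC subrK mulr1 mul1r].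
Qed.

Lemma L1 (star : R -> R) : involution star -> (strongly_J_star_clean star <-> PP).
Proof.
move=> [sA [sM sI]].
have s0 : star 0 = 0.
  have h : star 0 + star 0 = star 0 + 0 by rewrite -sA !addr0.
  exact: (addrI (star 0) h).
have s1 : star 1 = 1.
  have := sM (star 1) 1; rewrite mulr1 sI mulr1 => h; by rewrite -h.
split.
  move=> H x; have [e [u [[ide _] [ju [E _]]]]] := H x.
  case: (idem01 ide) => ee.
    by left; rewrite E ee add0r; apply/jacM.
  right; apply: MN'; rewrite opprB E ee addrC addKr; exact/jacM.
move=> H a; case: (H a) => h.
  exists 0, a; split; first by split; [exact: mulr0 | exact: s0].
  by split; [apply/jacM | rewrite add0r mulr0 mul0r].
exists 1, (a - 1); split; first by split; [exact: mulr1 | exact: s1].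
by split; [apply/jacM; exact: Mneg1 | rewrite addrC subrK mulr1 mul1r].
Qed.

End Local.

Theorem corollary2p8 (R : unitRingType) (star : R -> R) :
  involution star -> local_ring R ->
  (strongly_J_star_clean star <-> strongly_J_clean R) /\
  (strongly_J_clean R <-> uniquely_clean R) /\
  (uniquely_clean R <-> quotient_J_iso_Z2 R) /\
  (quotient_J_iso_Z2 R <-> one_not_sum_two_units R).
Proof.
move=> hs [M [HM Hu]].
have h1 := L1 HM Hu hs; have h2 := L2 HM Hu; have h3 := L3 HM Hu.
have h4 := L4 HM Hu; have h5 := L5 HM Hu.
tauto.
Qed.
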